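(* Let $(\alpha_s)$, $(\sigma_s)$ be positive coefficients with $\alpha_s^2+\sigma_s^2=1$. Fix reverse times $t+\Delta t$, $t$, $t-\Delta t$, a vector $\boldsymbol{\epsilon}\in\mathbb{R}^n$ (the noise prediction $\bm{\epsilon}_\Theta(\boldsymbol{x}_t,t)$, treated as deterministic), and a real number $\beta_t>0$. Let $\mu_t,\mu_{t+\Delta t}\in\mathbb{R}^n$ be deterministic vectors and let $\eta_t,\eta_{t+\Delta t}$ be random vectors in $\mathbb{R}^n$ with $\mathbb{E}[\eta_t]=\mathbb{E}[\eta_{t+\Delta t}]=0$, $\mathrm{Var}(\eta_t)=\mathrm{Var}(\eta_{t+\Delta t})=\Sigma_t$ and $\mathrm{Cov}(\eta_t,\eta_{t+\Delta t})=\rho_t\Sigma_t$ for some $0\le\rho_t<1$. Set $\boldsymbol{D}_t=\mu_t+\eta_t$, $\boldsymbol{D}_{t+\Delta t}=\mu_{t+\Delta t}+\eta_{t+\Delta t}$, $\widetilde{\boldsymbol{D}}_t=(1-\beta_t)\boldsymbol{D}_t+\beta_t\boldsymbol{D}_{t+\Delta t}$, $r_t:=\mu_{t+\Delta t}-\mu_t$, and $$\boldsymbol{x}^{\mathrm{PS}}_{t-\Delta t}=\alpha_{t-\Delta t}\boldsymbol{D}_t+\sigma_{t-\Delta t}\boldsymbol{\epsilon},\quad \boldsymbol{x}^{\mathrm{LAMP}}_{t-\Delta t}=\alpha_{t-\Delta t}\widetilde{\boldsymbol{D}}_t+\sigma_{t-\Delta t}\boldsymbol{\epsilon},\quad \boldsymbol{x}^{\mu}_{t-\Delta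 t}=\alpha_{t-\Delta t}\mu_t+\sigma_{t-\Delta t}\boldsymbol{\epsilon}.$$ Then $$\mathbb{E}\|\boldsymbol{x}^{\mathrm{PS}}_{t-\Delta t}-\boldsymbol{x}^{\mu}_{t-\Delta t}\|^2=\alpha_{t-\Delta t}^2\,\mathrm{tr}(\Sigma_t),$$ $$\mathbb{E}\|\boldsymbol{x}^{\mathrm{LAMP}}_{t-\Delta t}-\boldsymbol{x}^{\mu}_{t-\Delta t}\|^2=\alpha_{t-\Delta t}^2\Big[\big(1-2\beta_t(1-\beta_t)(1-\rho_t)\big)\mathrm{tr}(\Sigma_t)+\beta_t^2\|r_t\|^2\Big].$$ Consequently, $\mathbb{E}\|\boldsymbol{x}^{\mathrm{LAMP}}_{t-\Delta t}-\boldsymbol{x}^{\mu}_{t-\Delta t}\|^2<\mathbb{E}\|\boldsymbol{x}^{\mathrm{PS}}_{t-\Delta t}-\boldsymbol{x}^{\mu}_{t-\Delta t}\|^2$ whenever $$\beta_t\|r_t\|^2<2(1-\beta_t)(1-\rho_t)\,\mathrm{tr}(\Sigma_t).$$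
   Context: $\boldsymbol{D}_t,\boldsymbol{D}_{t+\Delta t}$ model data-consistent estimates in a diffusion posterior sampler as local targets $\mu$ plus zero-mean estimation errors $\eta$; $\boldsymbol{x}^{\mu}_{t-\Delta t}$ is the ideal one-step state. $\mathrm{Var}$ denotes the covariance matrix and $\mathrm{Cov}(\eta_t,\eta_{t+\Delta t})=\mathbb{E}[\eta_t\eta_{t+\Delta t}^\top]$; $\|\cdot\|$ is the Euclidean norm. *)

(* Defs.v *)
From HB Require Import structures.
From mathcomp Require Import all_boot all_order all_algebra.
From mathcomp Require Import all_classical all_reals all_analysis.
Set Implicit Arguments. Unset Strict Implicit. Unset Printing Implicit Defensive.
Import Order.TTheory GRing.Theory Num.Theory.
Local Open Scope ring_scope.

Definition sqnorm (R : realType) (n : nat) (v : 'rV[R]_n) : R :=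
  \sum_(i < n) (v ord0 i) ^+ 2.

Definition rvcomp (T : Type) (R : realType) (n : nat)
  (X : T -> 'rV[R]_n) (i : 'I_n) : T -> R := fun w => X w ord0 i.

(* Main.v *)
Require Import Defs.
From HB Require Import structures.
From mathcomp Require Import all_boot all_order all_algebra.
From mathcomp Require Import all_classical all_reals all_analysis.
From mathcomp Require Import ring lra.
Import Order.TTheory GRing.Theory Num.Theory.
Local Open Scope ring_scope.
Set Implicit Arguments. Unset Strict Implicit.

Section S.
Context d (T : measurableType d) (R : realType) (P : probability T R).

Lemma L1_of2 (f : T -> R) : f \in Lfun P 2%:E -> f \in Lfun P 1.
Proof. by move=> h; apply: Lfun_subset12 => //; apply: fin_num_measure. Qed.

Lemma L1scale (f : T -> R) k : f \in Lfun P 1 -> (fun w => k * f w) \in Lfun P 1.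
Proof. move=> h.
have -> : (fun w => k * f w) = k \o* f by apply/funeqP => w /=; rewrite mulrC.
exact: (@Lfun_scale _ _ _ P f k 1 (lexx _) h). Qed.

Lemma L1add (f g : T -> R) : f \in Lfun P 1 -> g \in Lfun P 1 -> (fun w => f w + g w) \in Lfun P 1.
Proof. move=> hf hg. exact: (rpredD hf hg). Qed.

Lemma Eadd (f g : T -> R) x y : f \in Lfun P 1 -> g \in Lfun P 1 ->
  ('E_P[f] = x%:E)%E -> ('E_P[g] = y%:E)%E -> ('E_P[fun w => (f w + g w)%R] = (x + y)%:E)%E.
Proof. move=> hf hg ef eg. by rewrite (expectationD hf hg) ef eg. Qed.

Lemma Escale (f : T -> R) k x : f \in Lfun P 1 ->
  ('E_P[f] = x%:E)%E -> ('E_P[fun w => (k * f w)%R] = (k * x)%:E)%E.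
Proof. move=> hf ef.
have -> : (fun w => k * f w) = k \o* f by apply/funeqP => w /=; rewrite mulrC.
by rewrite (expectationZl _ hf) ef. Qed.

Lemma Emul (f g : T -> R) : f \in Lfun P 2%:E -> g \in Lfun P 2%:E -> (fun w => f w * g w) \in Lfun P 1.
Proof. move=> hf hg; exact: Lfun2_mul_Lfun1. Qed.


Lemma Eadd_gen (f g : T -> R) x y z : ('E_P[f] = x%:E)%E -> ('E_P[g] = y%:E)%E ->
  f \in Lfun P 1 -> g \in Lfun P 1 -> z = x + y ->
  ('E_P[fun w => (f w + g w)%R] = z%:E)%E.
Proof. by move=> ef eg hf hg ->; apply: Eadd. Qed.

Lemma Escale_gen (f : T -> R) k x z : ('E_P[f] = x%:E)%E -> f \in Lfun P 1 -> z = k * x ->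
  ('E_P[fun w => (k * f w)%R] = z%:E)%E.
Proof. by move=> ef hf ->; apply: Escale. Qed.

Lemma Ecst k : ('E_P[fun w : T => k] = k%:E)%E.
Proof. exact: expectation_cst. Qed.

Lemma L1cst k : (fun w : T => k) \in Lfun P 1.
Proof. exact: (@Lfun_cst _ _ _ P k 1). Qed.

Ltac solve_L1 := repeat first [ apply: L1add | apply: L1scale | apply: L1cst | apply: Emul | apply: L1_of2 ]; assumption.

Lemma Equad (X Y : T -> R) c p q exx eyy exy :
  X \in Lfun P 2%:E -> Y \in Lfun P 2%:E ->
  ('E_P[X] = 0)%E -> ('E_P[Y] = 0)%E ->
  ('E_P[fun w => (X w * X w)%R] = exx%:E)%E ->
  ('E_P[fun w => (Y w * Y w)%R] = eyy%:E)%E ->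
  ('E_P[fun w => (X w * Y w)%R] = exy%:E)%E ->
  ('E_P[fun w => ((c + p * X w + q * Y w) ^+ 2)%R] =
     (c ^+ 2 + p ^+ 2 * exx + q ^+ 2 * eyy + 2 * p * q * exy)%:E)%E.
Proof.
move=> hX hY eX eY exx' eyy' exy'.
have eX' : ('E_P[X] = 0%:E)%E by rewrite eX.
have eY' : ('E_P[Y] = 0%:E)%E by rewrite eY.
have -> : (fun w => ((c + p * X w + q * Y w) ^+ 2)%R) =
  (fun w => (((((c ^+ 2 + (2 * c * p) * X w) + (2 * c * q) * Y w)
     + p ^+ 2 * (X w * X w)) + q ^+ 2 * (Y w * Y w)) + (2 * p * q) * (X w * Y w))%R).
  by apply/funeqP => w; ring.
eapply Eadd_gen; [ | eapply Escale_gen; [exact: exy' | solve_L1 | reflexivity] | solve_L1 | solve_L1 | ].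
eapply Eadd_gen; [ | eapply Escale_gen; [exact: eyy' | solve_L1 | reflexivity] | solve_L1 | solve_L1 | reflexivity].
eapply Eadd_gen; [ | eapply Escale_gen; [exact: exx' | solve_L1 | reflexivity] | solve_L1 | solve_L1 | reflexivity].
eapply Eadd_gen; [ | eapply Escale_gen; [exact: eY' | solve_L1 | reflexivity] | solve_L1 | solve_L1 | reflexivity].
eapply Eadd_gen; [ exact: Ecst | eapply Escale_gen; [exact: eX' | solve_L1 | reflexivity] | solve_L1 | solve_L1 | reflexivity].
ring.
Qed.


Lemma Esum n (F : 'I_n -> T -> R) (v : 'I_n -> R) :
  (forall i, F i \in Lfun P 1) -> (forall i, ('E_P[F i] = (v i)%:E)%E) ->
  (fun w => \sum_(i < n) F i w) \in Lfun P 1 /\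
  ('E_P[fun w => (\sum_(i < n) F i w)%R] = (\sum_(i < n) v i)%:E)%E.
Proof.
elim: n F v => [|n IH] F v hF eF.
  have -> : (fun w => \sum_(i < 0) F i w) = (fun w => 0) by apply/funeqP => w; rewrite big_ord0.
  by rewrite big_ord0; split; [exact: L1cst | exact: Ecst].
have -> : (fun w => \sum_(i < n.+1) F i w) =
   (fun w => ((fun w => \sum_(i < n) F (widen_ord (leqnSn n) i) w) w + F ord_max w)%R).
  by apply/funeqP => w; rewrite big_ord_recr.
have [h1 h2] := IH (fun i => F (widen_ord (leqnSn n) i)) (fun i => v (widen_ord (leqnSn n) i))
  (fun i => hF _) (fun i => eF _).
split; first by apply: L1add.
by rewrite big_ord_recr /=; apply: Eadd.
Qed.


Lemma L2add (f g : T -> R) : f \in Lfun P 2%:E -> g \in Lfun P 2%:E -> (fun w => f w + g w) \in Lfun P 2%:E.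
Proof. move=> hf hg.
have h12 : (1 <= (2%:E : \bar R))%E by rewrite lee_fin ler1n.
exact: ((@Lfun_addr_closed _ _ _ P 2%:E h12).2 _ _ hf hg). Qed.

Lemma L2scale (f : T -> R) k : f \in Lfun P 2%:E -> (fun w => k * f w) \in Lfun P 2%:E.
Proof. move=> h.
have -> : (fun w => k * f w) = k \o* f by apply/funeqP => w /=; rewrite mulrC.
have h2 : (1 <= 2 :> R) by rewrite ler1n.
exact: (@Lfun_scale _ _ _ P f k 2 h2 h). Qed.

Lemma L2cst k : (fun w : T => k) \in Lfun P 2%:E.
Proof. exact: (@Lfun_cst _ _ _ P k 2). Qed.

Lemma L1sq (f : T -> R) : f \in Lfun P 2%:E -> (fun w => f w ^+ 2) \in Lfun P 1.
Proof. move=> h. have -> : (fun w => f w ^+ 2) = (fun w => f w * f w) by apply/funeqP => w; rewrite expr2.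
exact: Emul. Qed.

End S.

Ltac solve_L1 := repeat first [ apply: L1add | apply: L1scale | apply: L1cst | apply: Emul | apply: L1_of2 ]; assumption.


Unset Implicit Arguments. Set Strict Implicit.

Theorem proposition2 (d : measure_display) (T : measurableType d)
  (R : realType) (P : probability T R) (n : nat)
  (alpha sigma : R -> R)
  (halpha : forall s, 0 < alpha s) (hsigma : forall s, 0 < sigma s)
  (hunit : forall s, alpha s ^+ 2 + sigma s ^+ 2 = 1)
  (t dt : R) (hdt : 0 < dt)
  (eps : 'rV[R]_n) (beta : R) (hbeta : 0 < beta)
  (mu_t mu_s : 'rV[R]_n) (eta_t eta_s : T -> 'rV[R]_n)
  (Sigma : 'M[R]_n) (rho : R) (hrho0 : 0 <= rho) (hrho1 : rho < 1)
  (L2t : forall i, rvcomp eta_t i \in Lfun P 2%:E)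
  (L2s : forall i, rvcomp eta_s i \in Lfun P 2%:E)
  (Et : forall i, ('E_P[rvcomp eta_t i] = 0)%E)
  (Es : forall i, ('E_P[rvcomp eta_s i] = 0)%E)
  (Vt : forall i j, covariance P (rvcomp eta_t i) (rvcomp eta_t j) = (Sigma i j)%:E)
  (Vs : forall i j, covariance P (rvcomp eta_s i) (rvcomp eta_s j) = (Sigma i j)%:E)
  (Cts : forall i j,
     ('E_P[fun w => (rvcomp eta_t i w * rvcomp eta_s j w)%R] = (rho * Sigma i j)%:E)%E) :
  let D_t := fun w => mu_t + eta_t w in
  let D_s := fun w => mu_s + eta_s w in
  let Dtil := fun w => (1 - beta) *: D_t w + beta *: D_s w in
  let r := mu_s - mu_t in
  let a := alpha (t - dt) in
  let sg := sigma (t - dt) in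
  let xPS := fun w => a *: D_t w + sg *: eps in
  let xLAMP := fun w => a *: Dtil w + sg *: eps in
  let xmu := a *: mu_t + sg *: eps in
  ('E_P[fun w => sqnorm (xPS w - xmu)] = (a ^+ 2 * \tr Sigma)%:E)%E /\
  ('E_P[fun w => sqnorm (xLAMP w - xmu)] =
     (a ^+ 2 * ((1 - 2 * beta * (1 - beta) * (1 - rho)) * \tr Sigma
                + beta ^+ 2 * sqnorm r))%:E)%E /\
  (beta * sqnorm r < 2 * (1 - beta) * (1 - rho) * \tr Sigma ->
   ('E_P[fun w => sqnorm (xLAMP w - xmu)] < 'E_P[fun w => sqnorm (xPS w - xmu)])%E).
Proof.
move=> D_t D_s Dtil r a sg xPS xLAMP xmu.
have L1t i := L1_of2 (L2t i).
have L1s i := L1_of2 (L2s i).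
have EXX i j : ('E_P[fun w => (rvcomp eta_t i w * rvcomp eta_t j w)%R] = (Sigma i j)%:E)%E.
  have := Vt i j; rewrite covarianceE ?Et ?mule0 ?sube0 //; exact: Emul.
have EYY i j : ('E_P[fun w => (rvcomp eta_s i w * rvcomp eta_s j w)%R] = (Sigma i j)%:E)%E.
  have := Vs i j; rewrite covarianceE ?Es ?mule0 ?sube0 //; exact: Emul.
have trE : \tr Sigma = \sum_(i < n) Sigma i i by [].
have HPS : ('E_P[fun w => sqnorm (xPS w - xmu)] = (a ^+ 2 * \tr Sigma)%:E)%E.
  have -> : (fun w => sqnorm (xPS w - xmu)) = (fun w => \sum_(i < n)
     (fun i w => ((0 + a * rvcomp eta_t i w + 0 * rvcomp eta_s i w) ^+ 2)%R) i w).
    apply/funeqP => w; rewrite /sqnorm; apply: eq_bigr => i _.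
    rewrite /xPS /xmu /D_t /rvcomp !mxE; ring.
  have hF : forall i, (fun w => ((0 + a * rvcomp eta_t i w + 0 * rvcomp eta_s i w) ^+ 2)%R) \in Lfun P 1.
    by move=> i; have := L2t i; have := L2s i; move=> ? ?; apply: L1sq; repeat first [ apply: L2add | apply: L2scale | apply: L2cst ]; assumption.
  have [_ ->] := Esum (v := fun i => (0 ^+ 2 + a ^+ 2 * Sigma i i + 0 ^+ 2 * Sigma i i + 2 * a * 0 * (rho * Sigma i i))%R)
     hF (fun i => Equad 0 a 0 (L2t i) (L2s i) (Et i) (Es i) (EXX i i) (EYY i i) (Cts i i)).
  by rewrite trE mulr_sumr; congr (_%:E); apply: eq_bigr => i _; ring.
have HLAMP : ('E_P[fun w => sqnorm (xLAMP w - xmu)] =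
     (a ^+ 2 * ((1 - 2 * beta * (1 - beta) * (1 - rho)) * \tr Sigma
                + beta ^+ 2 * sqnorm r))%:E)%E.
  have -> : (fun w => sqnorm (xLAMP w - xmu)) = (fun w => \sum_(i < n)
     (fun i w => ((a * beta * r ord0 i + (a * (1 - beta)) * rvcomp eta_t i w + (a * beta) * rvcomp eta_s i w) ^+ 2)%R) i w).
    apply/funeqP => w; rewrite /sqnorm; apply: eq_bigr => i _.
    rewrite /xLAMP /xmu /Dtil /D_t /D_s /r /rvcomp !mxE; ring.
  have hF : forall i, (fun w => ((a * beta * r ord0 i + (a * (1 - beta)) * rvcomp eta_t i w + (a * beta) * rvcomp eta_s i w) ^+ 2)%R) \in Lfun P 1.
    by move=> i; have := L2t i; have := L2s i; move=> ? ?; apply: L1sq; repeat first [ apply: L2add | apply: L2scale | apply: L2cst ]; assumption.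
  have [_ ->] := Esum (v := fun i => ((a * beta * r ord0 i) ^+ 2 + (a * (1 - beta)) ^+ 2 * Sigma i i + (a * beta) ^+ 2 * Sigma i i + 2 * (a * (1 - beta)) * (a * beta) * (rho * Sigma i i))%R)
     hF (fun i => Equad _ _ _ (L2t i) (L2s i) (Et i) (Es i) (EXX i i) (EYY i i) (Cts i i)).
  rewrite trE /sqnorm mulr_sumr mulr_sumr -big_split mulr_sumr /=; congr (_%:E).
  by apply: eq_bigr => i _; ring.
split => //; split => //.
rewrite HPS HLAMP lte_fin => H.
rewrite -subr_lt0.
have -> : a ^+ 2 * ((1 - 2 * beta * (1 - beta) * (1 - rho)) * \tr Sigma + beta ^+ 2 * sqnorm r)
   - a ^+ 2 * \tr Sigma = (a ^+ 2 * beta) * (beta * sqnorm r - 2 * (1 - beta) * (1 - rho) * \tr Sigma) by ring.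
rewrite pmulr_rlt0; first by rewrite subr_lt0.
by rewrite mulr_gt0 // exprn_gt0 // halpha.
Qed.
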